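(* Let $n\in\mathbb N$ and let $\mathfrak S$ be as below. Then: (1) $\mathfrak S$ is a $\mathbb C$-algebra with respect to termwise addition and the multiplication given by the Leibniz rule, $\big(\sum_{\underline k}a_{\underline k}\underline\partial^{\underline k}\big)\cdot\big(\sum_{\underline l}b_{\underline l}\underline\partial^{\underline l}\big)=\sum_{\underline k,\underline l}\sum_{\underline 0\le\underline i\le\underline k}\binom{k_1}{i_1}\cdots\binom{k_n}{i_n}a_{\underline k}\frac{\partial^{|\underline i|}b_{\underline l}}{\partial x_1^{i_1}\cdots\partial x_n^{i_n}}\underline\partial^{\underline k+\underline l-\underline i}$ (which is well defined on $\mathfrak S$); in particular $\mathfrak S$ contains $\mathfrak D=\mathbb C[[x_1,\dots,x_n]][\partial_1,\dots,\partial_n]$ as a subalgebra; (2) the map $\sum_{\underline k}a_{\underline k}\underline\partial^{\underline k}\mapsto\sum_{\underline k}a_{\underline k}(0)\underline\partial^{\underline k}$ induces an isomorphism of $\mathbb C$-vector spaces $\mathfrak S/\mathfrak m\mathfrak S\to\mathbb C[\partial_1,\dots,\partial_n]$; (3) there is a natural injective algebra homomorphism $\mathfrak S\to\operatorname{End}^{\mathrm c}_{\mathbb C}(\widehat B)$ into the algebra of $\mathbb C$-linear endomorphisms of $\widehat B$ continuous in the $\mathfrak m$-adic topology; it makes $\widehat B$ a left $\mathfrak S$-module extending the natural left $\mathfrak D$-module structure.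
   Context: $\widehat B=\mathbb C[[x_1,\dots,x_n]]$, $\mathfrak m=(x_1,\dots,x_n)$, $\upsilon$ the $\mathfrak m$-adic valuation on $\widehat B$. Multi-indices $\underline k\in\mathbb N_0^n$, $\underline\partial^{\underline k}=\partial_1^{k_1}\cdots\partial_n^{k_n}$, $|\underline k|=k_1+\dots+k_n$. For a formal sum $P=\sum_{\underline k\ge\underline 0}a_{\underline k}\underline\partial^{\underline k}$ with $a_{\underline k}\in\widehat B$, its order is $o(P)=\sup\{|\underline k|-\upsilon(a_{\underline k})\}\in\mathbb Z\cup\{\infty\}$, and $\mathfrak S=\{P:o(P)<\infty\}$. *)

(* Defs.v *)
From HB Require Import structures.
From mathcomp Require Import all_boot all_order all_algebra.
From mathcomp Require Import boolp classical_sets functions cardinality fsbigop reals.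
From mathcomp Require Import complex.
From mathcomp Require Export mpoly.

Set Implicit Arguments.
Unset Strict Implicit.
Unset Printing Implicit Defensive.
Import Order.TTheory GRing.Theory Num.Theory.
Local Open Scope ring_scope.

(* Multi-indices are the monomials 'X_{1..n} of multinomials:
   k i = k_i,  mdeg k = |k|,  (i <= k)%MM componentwise,
   (k + l)%MM, (k - l)%MM (componentwise, truncated), U_(t) = t-th unit.

   A formal power series f in B^ = K[[x_1,...,x_n]] is represented by its
   coefficient family  f : 'X_{1..n} -> K  (f j = coefficient of x^j).
   NB: the pointwise product on functions is NEVER used; the product of
   power series is [smul] below. *)
Definition series (K : fieldType) (n : nat) := 'X_{1..n} -> K^o.

(* A formal sum  P = sum_k a_k d^k  is represented by its coefficient
   family  P : 'X_{1..n} -> series  (P k = a_k).  Termwise addition and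
   scalar multiplication are the pointwise ones. *)
Definition fsdo (K : fieldType) (n : nat) := 'X_{1..n} -> series K n.

Section Defs.
Variables (K : fieldType) (n : nat).
Implicit Types (f g : series K n) (P Q : fsdo K n).

Definition sone : series K n := fun j => (j == 0%MM)%:R.
Definition svar (t : 'I_n) : series K n := fun j => (j == U_(t)%MM)%:R.

Definition smul f g : series K n :=
  fun j => \sum_(p \in [set p : 'X_{1..n} | (p <= j)%MM]) f p * g (j - p)%MM.

Definition pderiv (t : 'I_n) f : series K n :=
  fun q => (q t).+1%:R * f (q + U_(t))%MM.

Definition sderiv (i : 'X_{1..n}) f : series K n :=
  fun q => (\prod_(t < n) ((q t + i t) ^_ (i t)))%:R * f (q + i)%MM.

(* upsilon(f) >= m  (m-adic valuation; upsilon(0) = +oo) *)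
Definition val_ge f (m : int) : Prop :=
  forall j : 'X_{1..n}, (mdeg j)%:Z < m -> f j = 0.

Definition in_m f : Prop :=
  exists g : 'I_n -> series K n, f = \sum_(t < n) smul (svar t) (g t).

(* o(P) = sup_k (|k| - upsilon(a_k)) < oo *)
Definition in_S P : Prop :=
  exists N : int, forall k, val_ge (P k) ((mdeg k)%:Z - N).

Definition in_D P : Prop := finite_set [set k | P k != 0].

Definition done : fsdo K n := fun k => if k == 0%MM then sone else 0.
Definition dcoef f : fsdo K n := fun k => if k == 0%MM then f else 0.
Definition dpart (t : 'I_n) : fsdo K n :=
  fun k => if k == U_(t)%MM then sone else 0.

Definition mbinom (k i : 'X_{1..n}) : nat := \prod_(t < n) 'C(k t, i t).

(* Leibniz product: the term of index (k, i) contributing to d^m,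
   where l = m - (k - i) (i.e. m = k + l - i), needs i <= k, k - i <= m *)
Definition lterm P Q (m k i : 'X_{1..n}) : series K n :=
  (mbinom k i)%:R *: smul (P k) (sderiv i (Q (m - (k - i))%MM)).

Definition lrange (m k : 'X_{1..n}) : set 'X_{1..n} :=
  [set i | (i <= k)%MM && (k - i <= m)%MM].

Definition dmul P Q : fsdo K n :=
  fun m j => \sum_(k \in [set: 'X_{1..n}])
               \sum_(i \in lrange m k) lterm P Q m k i j.

Definition dmul_welldef P Q : Prop :=
  forall m j, finite_set [set k | exists2 i, i \in lrange m k &
                                     lterm P Q m k i j != 0].

Definition lmul f P : fsdo K n := fun k => smul f (P k).
Definition in_mS P : Prop :=
  exists s : seq (series K n * fsdo K n),
    [/\ forall x, x \in s -> in_m x.1,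
        forall x, x \in s -> in_S x.2 &
        P = \sum_(x <- s) lmul x.1 x.2].

Definition act P (f : series K n) : series K n :=
  fun j => \sum_(k \in [set: 'X_{1..n}]) smul (P k) (sderiv k f) j.

Definition act_welldef P : Prop :=
  forall f j, finite_set [set k | smul (P k) (sderiv k f) j != 0].

Definition madic_continuous (phi : series K n -> series K n) : Prop :=
  forall N : int, exists M : int, forall f, val_ge f M -> val_ge (phi f) N.

End Defs.

Arguments done K n : clear implicits.
Arguments dpart K {n} t.
Arguments sone K n : clear implicits.
Arguments svar K {n} t.

(* Main.v *)
Require Import Defs.
From HB Require Import structures.
From mathcomp Require Import all_boot all_order all_algebra.
From mathcomp Require Import boolp classical_sets functions cardinality fsbigop reals.
From mathcomp Require Import complex.
From mathcomp Require Import mpoly.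
From mathcomp Require Import ring zify.
Import Order.TTheory GRing.Theory Num.Theory.
Local Open Scope ring_scope.
Set Implicit Arguments.
Unset Strict Implicit.
Unset Printing Implicit Defensive.


Section Dev.
Variables (K : numFieldType) (n : nat).
Local Notation X := ('X_{1..n}).

Definition dbox (b : nat) : seq X := map (@bmnm n b) (enum {: 'X_{1..n < b}}).

Lemma dbox_uniq b : uniq (dbox b).
Proof. by rewrite map_inj_uniq ?enum_uniq //; exact: val_inj. Qed.

Lemma mem_dbox b m : (m \in dbox b) = (mdeg m < b)%N.
Proof.
apply/mapP/idP => [[m' _ ->]|h]; first exact: bmdeg.
by exists (BMultinom h); rewrite ?mem_enum.
Qed.

Lemma mdeg_lem {p j : X} : (p <= j)%MM -> (mdeg p <= mdeg j)%N.
Proof. by move/mnm_lepP => h; rewrite !mdegE; apply: leq_sum => i _. Qed.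

Lemma fsumT_dbox (F : X -> K) b : (forall m, (b <= mdeg m)%N -> F m = 0) ->
  \sum_(m \in [set: X]) F m = \sum_(m <- dbox b) F m.
Proof.
move=> hF; rewrite (fsbigE (dbox b)) ?dbox_uniq //.
  by apply: eq_bigl => m; rewrite in_setT.
by move=> m _; rewrite mem_dbox -leqNgt; apply: hF.
Qed.

Lemma fsum_lem_dbox (F : X -> K) (j : X) B : (mdeg j < B)%N ->
  \sum_(p \in [set p : X | (p <= j)%MM]) F p = \sum_(p <- dbox B | (p <= j)%MM) F p.
Proof.
move=> hB; rewrite (fsbigE [seq p <- dbox B | (p <= j)%MM]).
- rewrite big_filter_cond; apply: eq_bigl => p /=.
  by apply/idP/idP => [/andP[]|h] //; rewrite h mem_set.
- by rewrite filter_uniq ?dbox_uniq.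
- by move=> p /=; rewrite mem_filter => /andP[].
- move=> p /= hp; rewrite mem_filter mem_dbox hp /=.
  by rewrite (leq_ltn_trans (mdeg_lem hp) hB).
Qed.

Lemma smulE (f g : series K n) j B : (mdeg j < B)%N ->
  smul f g j = \sum_(p <- dbox B | (p <= j)%MM) f p * g (j - p)%MM.
Proof. by move=> hB; rewrite /smul (fsum_lem_dbox _ hB). Qed.

End Dev.


Section DevB.
Variables (K : numFieldType) (n : nat).
Local Notation X := ('X_{1..n}).
Local Notation T := (@setT 'X_{1..n}).

Definition bnd (F : X -> K) b := forall x, (b <= mdeg x)%N -> F x = 0.

Lemma bnd_le (F : X -> K) b b' : (b <= b')%N -> bnd F b -> bnd F b'.
Proof. by move=> hb hF x hx; apply: hF; apply: leq_trans hx. Qed.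

Lemma fsumT (F : X -> K) b : bnd F b ->
  \sum_(m \in T) F m = \sum_(m <- dbox n b) F m.
Proof. exact: fsumT_dbox. Qed.

Lemma fsumD (F G : X -> K) b : bnd F b -> bnd G b ->
  \sum_(x \in T) (F x + G x) = \sum_(x \in T) F x + \sum_(x \in T) G x.
Proof.
move=> hF hG; rewrite (@fsumT F b) // (@fsumT G b) // (@fsumT _ b) ?big_split //.
by move=> x hx; rewrite hF ?hG ?addr0.
Qed.

Lemma fsumZ c (F : X -> K) :
  \sum_(x \in T) (c * F x) = c * \sum_(x \in T) F x.
Proof. by rewrite mulr_fsumr. Qed.

Lemma fsumZr c (F : X -> K) :
  \sum_(x \in T) (F x * c) = (\sum_(x \in T) F x) * c.
Proof. by rewrite mulr_fsuml. Qed.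

Lemma fsum_big (I : Type) (r : seq I) (P : pred I) (F : I -> X -> K) b :
  (forall i, P i -> bnd (F i) b) ->
  \sum_(x \in T) \sum_(i <- r | P i) F i x = \sum_(i <- r | P i) \sum_(x \in T) F i x.
Proof.
move=> hF; rewrite (@fsumT _ b).
  under [RHS]eq_bigr => i hi do rewrite (@fsumT _ b (hF i hi)).
  exact: exchange_big.
by move=> x hx; rewrite big1 // => i hi; rewrite hF.
Qed.

Lemma fsum_exchange (F : X -> X -> K) b :
  (forall x y, F x y != 0 -> (mdeg x < b)%N /\ (mdeg y < b)%N) ->
  \sum_(x \in T) \sum_(y \in T) F x y = \sum_(y \in T) \sum_(x \in T) F x y.
Proof.
move=> hF.
have h1 x y : (b <= mdeg x)%N -> F x y = 0.
  by move=> hx; apply/eqP; apply: contraLR hx => /hF[]; rewrite -ltnNge.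
have h2 x y : (b <= mdeg y)%N -> F x y = 0.
  by move=> hy; apply/eqP; apply: contraLR hy => /hF[]; rewrite -ltnNge.
rewrite (@fsumT _ b); last by move=> x hx; rewrite (@fsumT _ b) ?big1 // => y; rewrite h1.
rewrite [RHS](@fsumT _ b); last by move=> y hy; rewrite (@fsumT _ b) ?big1 // => x; rewrite h2.
under eq_bigr => x _ do rewrite (@fsumT _ b (fun y hy => h2 x y hy)).
under [RHS]eq_bigr => y _ do rewrite (@fsumT _ b (fun x hx => h1 x y hx)).
exact: exchange_big.
Qed.

Lemma fsum_shift (G : X -> K) (c : X) :
  \sum_(x \in T) G (x + c)%MM = \sum_(x \in T) (if (c <= x)%MM then G x else 0).
Proof.
rewrite [RHS](_ : _ = \sum_(x \in [set x : X | (c <= x)%MM]) G x); last first.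
  rewrite [RHS]fsbig_mkcond; apply: eq_fsbigr => x _; rewrite /patch.
  case: (boolP (c <= x)%MM) => h.
    by rewrite mem_set.
  by rewrite (_ : (x \in _) = false) //; apply/negbTE/negP => /set_mem /= hc; rewrite hc in h.
symmetry; apply: (reindex_fsbig (fun x => (x + c)%MM)); split.
- by move=> x _ /=; apply: lem_addl.
- by move=> x y _ _; apply: addIm.
- move=> x /= hx; exists (x - c)%MM => //; exact: submK.
Qed.

Lemma fsum_delta (G : X -> K) (c : X) :
  \sum_(x \in T) ((x == c)%:R * G x) = G c.
Proof.
rewrite -(fsbig_widen [set c]) ?fsbig_set1 ?eqxx ?mul1r //.
by move=> x [_ /= hx]; rewrite /= (introF eqP hx) mul0r.
Qed.

Lemma fsum_delta' (G : X -> K) (c : X) :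
  \sum_(x \in T) ((c == x)%:R * G x) = G c.
Proof. by under eq_fsbigr do rewrite eq_sym; apply: fsum_delta. Qed.

Lemma fsum0 : \sum_(x \in T) (0 : K) = 0.
Proof. by rewrite fsbig1. Qed.

End DevB.


Section Comb.
Variable n : nat.
Local Notation X := ('X_{1..n}).
Local Open Scope nat_scope.

Definition ff (a i : X) : nat := \prod_(t < n) (a t) ^_ (i t).

Lemma ffactD x m p : x ^_ (m + p) = x ^_ p * (x - p) ^_ m.
Proof.
elim: m => [|m IH]; first by rewrite add0n ffactn0 muln1.
by rewrite addSn !ffactnSr IH -mulnA -subnDA (addnC p m).
Qed.

Lemma mnm_le_mdeg (k : X) t : (k t <= mdeg k)%N.
Proof. by rewrite mdegE (bigD1 t) //= leq_addr. Qed.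

Lemma ff_nle (a i : X) : ~~ (i <= a)%MM -> ff a i = 0%N.
Proof.
move=> h; have [t ht] : exists t, (a t < i t)%N.
  apply/existsP; move: h; rewrite /lem negb_forall => /existsP[t ht].
  by apply/existsP; exists t; rewrite ltnNge.
by rewrite /ff (bigD1 t) //= ffact_small ?mul0n.
Qed.

Lemma ff_comp (q a b : X) :
  (ff (q + a) a * ff (q + a + b) b = ff (q + (a + b)) (a + b))%N.
Proof.
rewrite /ff -big_split /=; apply: eq_bigr => t _.
rewrite !mnmDE -!addnA ffactD mulnC.
by have -> : (q t + (a t + b t) - b t = q t + a t)%N by lia.
Qed.

Lemma vandermonde_ff a b k :
  \sum_(x < k.+1) 'C(k, x) * a ^_ x * b ^_ (k - x) = (a + b) ^_ k.
Proof.
rewrite -bin_ffact -binomial.Vandermonde big_distrl /=; apply: eq_bigr => [[x hx]] _ /=.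
rewrite ltnS in hx; rewrite -!bin_ffact -(bin_fact hx); ring.
Qed.

Definition mnm_of (B : nat) (f : {ffun 'I_n -> 'I_B}) : X :=
  [multinom (f t : nat) | t < n].

Lemma prod_sum_box (g : 'I_n -> nat -> nat) (k : X) B : (mdeg k < B)%N ->
  \sum_(i <- dbox n B | (i <= k)%MM) \prod_(t < n) g t (i t)
  = \prod_(t < n) \sum_(x < (k t).+1) g t x.
Proof.
move=> hB; set D := (mdeg k).+1.
have hkD t : (k t < D)%N by rewrite ltnS mnm_le_mdeg.
rewrite (eq_bigr (fun t => \sum_(x < D) if (x <= k t)%N then g t x else 0%N)); last first.
  move=> t _; rewrite (big_ord_widen D (g t)) ?hkD // big_mkcond /=.
  by apply: eq_bigr => x _; rewrite ltnS.
rewrite bigA_distr_bigA /=.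
rewrite (eq_bigr (fun f => if (mnm_of f <= k)%MM then \prod_(t < n) g t (mnm_of f t) else 0%N)); last first.
  move=> f _; case: ifP => h.
    apply: eq_bigr => t _; rewrite /mnm_of mnmE.
    by move/mnm_lepP: h => /(_ t); rewrite mnmE => ->.
  have [t ht] : exists t, ~~ (f t <= k t)%N.
    apply/existsP; move: h; rewrite /lem negb_forall => /existsP[t ht].
    by apply/existsP; exists t; rewrite /mnm_of mnmE in ht.
  by rewrite (bigD1 t) //= (negbTE ht) mul0n.
rewrite -big_mkcond /= -big_filter.
rewrite -[RHS]big_filter -(big_map (@mnm_of D) predT (fun i => \prod_(t < n) g t (i t))).
apply: perm_big; apply: uniq_perm.
- by rewrite filter_uniq ?dbox_uniq.
- rewrite map_inj_in_uniq ?filter_uniq ?index_enum_uniq //.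
  move=> f1 f2 _ _ /mnmP h; apply/ffunP => t; apply/val_inj.
  by move: (h t); rewrite /mnm_of !mnmE.
move=> i; rewrite mem_filter mem_dbox; apply/andP/mapP.
- move=> [hik _]; exists [ffun t => inord (i t) : 'I_D].
    rewrite mem_filter mem_index_enum andbT.
    suff -> : mnm_of [ffun t => inord (i t) : 'I_D] = i by [].
    apply/mnmP => t; rewrite /mnm_of mnmE ffunE inordK //.
    by move/mnm_lepP: hik => /(_ t) /leq_ltn_trans; apply.
  apply/mnmP => t; rewrite /mnm_of mnmE ffunE inordK //.
  by move/mnm_lepP: hik => /(_ t) /leq_ltn_trans; apply.
- move=> [f]; rewrite mem_filter => /andP[hf _] ->; split => //.
  by rewrite (leq_ltn_trans (mdeg_lem hf)).
Qed.

Definition mbinom' (k i : X) := mbinom k i.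

Lemma vandermonde_mff (a b k : X) B : (mdeg k < B)%N ->
  \sum_(i <- dbox n B | (i <= k)%MM) mbinom k i * ff a i * ff b (k - i)%MM
  = ff (a + b) k.
Proof.
move=> hB.
rewrite (eq_bigr (fun i : X => \prod_(t < n) ('C(k t, i t) * (a t) ^_ (i t) * (b t) ^_ (k t - i t)))); last first.
  move=> i _; rewrite /mbinom /ff -!big_split /=; apply: eq_bigr => t _.
  by rewrite mnmBE.
rewrite (prod_sum_box (fun t x => 'C(k t, x) * (a t) ^_ x * (b t) ^_ (k t - x))) //.
rewrite /ff; apply: eq_bigr => t _; rewrite vandermonde_ff mnmDE //.
Qed.

End Comb.


Section Series.
Variables (K : numFieldType) (n : nat).
Local Notation X := ('X_{1..n}).
Local Notation T := (@setT 'X_{1..n}).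
Local Notation series := (series K n).
Implicit Types (f g h : series).

Lemma dsum_delta (G : X -> K) (x : X) B :
  \sum_(p <- dbox n B) ((p == x)%:R * G p) = if (mdeg x < B)%N then G x else 0.
Proof.
case: ifP => hx.
  rewrite (bigD1_seq x) ?mem_dbox ?dbox_uniq //= eqxx mul1r big1 ?addr0 //.
  by move=> p /negbTE ->; rewrite mul0r.
rewrite big1_seq // => p /andP[_ hp]; case: eqP hp => [->|]; last by rewrite mul0r.
by rewrite mem_dbox hx.
Qed.

Lemma eqadd_mdeg (p q j : X) : (p + q)%MM == j ->
  (mdeg p <= mdeg j)%N && (mdeg q <= mdeg j)%N.
Proof. by move/eqP <-; rewrite mdegD leq_addr leq_addl. Qed.

Lemma smul_pair f g j B : (mdeg j < B)%N ->
  smul f g j = \sum_(p <- dbox n B) \sum_(q <- dbox n B)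
                  (((p + q)%MM == j)%:R * (f p * g q)).
Proof.
move=> hB; rewrite (smulE _ _ hB) big_mkcond /=; apply: eq_bigr => p _.
case: (boolP (p <= j)%MM) => h.
  rewrite (eq_bigr (fun q => (q == (j - p)%MM)%:R * (f p * g q))).
    rewrite dsum_delta ifT //; apply: leq_ltn_trans hB.
    by rewrite mdegB.
  move=> q _; congr (_%:R * _).
  suff -> : ((p + q)%MM == j) = (q == (j - p)%MM) by [].
  apply/idP/idP => /eqP hh; apply/eqP.
    by rewrite -hh addmC addmK.
  by rewrite hh addmC submK.
rewrite big1 // => q _; case: eqP => [hpq|]; last by rewrite mul0r.
by move: h; rewrite -hpq lem_addr.
Qed.

Lemma dsum_delta_ind (F : X -> X) (x j : X) (Z : K) B : (mdeg j < B)%N ->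
  (mdeg x <= mdeg (F x))%N ->
  \sum_(p <- dbox n B) ((F p == j)%:R * ((x == p)%:R * Z)) = (F x == j)%:R * Z.
Proof.
move=> hj hx.
rewrite (eq_bigr (fun p => (p == x)%:R * ((F p == j)%:R * Z))); last first.
  by move=> p _; rewrite mulrCA eq_sym.
rewrite dsum_delta; case: ifP => // hB; case: eqP; rewrite ?mul0r // => hF.
by move: hB; rewrite (leq_ltn_trans hx) // hF.
Qed.

Lemma smul_assoc f g h : smul (smul f g) h = smul f (smul g h).
Proof.
apply/funext => j; set B := (mdeg j).+1; have hB : (mdeg j < B)%N by [].
rewrite (smul_pair _ _ hB) (smul_pair _ _ hB).
have E1 : forall p c : X, p \in dbox n B ->
  ((p + c)%MM == j)%:R * (smul f g p * h c) =
  \sum_(a <- dbox n B) \sum_(b <- dbox n B)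
     (((p + c)%MM == j)%:R * (((a + b)%MM == p)%:R * (f a * g b * h c))).
  move=> p c; rewrite mem_dbox => hp; rewrite (smul_pair _ _ hp) mulr_suml mulr_sumr.
  apply: eq_bigr => a _; rewrite mulr_suml mulr_sumr; apply: eq_bigr => b _.
  by rewrite !mulrA.
rewrite (eq_big_seq _ (fun p hp => eq_bigr _ (fun c _ => E1 p c hp))).
have E2 : forall a q : X, q \in dbox n B ->
  ((a + q)%MM == j)%:R * (f a * smul g h q) =
  \sum_(b <- dbox n B) \sum_(c <- dbox n B)
     (((a + q)%MM == j)%:R * (((b + c)%MM == q)%:R * (f a * g b * h c))).
  move=> a q; rewrite mem_dbox => hq; rewrite (smul_pair _ _ hq) !mulr_sumr.
  apply: eq_bigr => b _; rewrite !mulr_sumr; apply: eq_bigr => c _.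
  by ring.
rewrite [RHS](eq_bigr _ (fun a _ => eq_big_seq _ (fun q hq => E2 a q hq))).
(* LHS: p c a b ; RHS: a q b c *)
rewrite exchange_big /=.   (* c p a b *)
under eq_bigr => c _ do rewrite exchange_big /=. (* c a p b *)
under eq_bigr => c _ do under eq_bigr => a _ do rewrite exchange_big /=. (* c a b p *)
under eq_bigr => c _ do under eq_bigr => a _ do under eq_bigr => b _ do
  rewrite (@dsum_delta_ind (fun p => (p + c)%MM) (a + b)%MM j _ _ hB (mdeg_lem (lem_addr _ _))).
under [RHS]eq_bigr => a _ do rewrite exchange_big /=. (* a b q c *)
under [RHS]eq_bigr => a _ do under eq_bigr => b _ do rewrite exchange_big /=. (* a b c q *)
under [RHS]eq_bigr => a _ do under eq_bigr => b _ do under eq_bigr => c _ do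
  rewrite (@dsum_delta_ind (fun q => (a + q)%MM) (b + c)%MM j _ _ hB (mdeg_lem (lem_addl _ _))).
rewrite exchange_big /=; apply: eq_bigr => a _.
rewrite exchange_big /=; apply: eq_bigr => b _; apply: eq_bigr => c _.
by rewrite addmA.
Qed.

End Series.


Section Series2.
Variables (K : numFieldType) (n : nat).
Local Notation X := ('X_{1..n}).
Local Notation T := (@setT 'X_{1..n}).
Local Notation series := (series K n).
Implicit Types (f g h : series).

Lemma addsE f g j : (f + g) j = f j + g j. Proof. by []. Qed.
Lemma scalesE c f j : (c *: f) j = c * f j. Proof. by []. Qed.
Lemma zerosE j : (0 : series) j = 0. Proof. by []. Qed.
Lemma oppsE f j : (- f) j = - f j. Proof. by []. Qed.

Lemma sderivE i f q : sderiv i f q = (ff (q + i)%MM i)%:R * f (q + i)%MM.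
Proof.
rewrite /sderiv /ff; congr (_%:R * _); apply: eq_bigr => t _.
by rewrite mnmDE.
Qed.

Lemma sderiv0 f : sderiv 0%MM f = f.
Proof.
apply/funext => q; rewrite sderivE addm0 /ff big1 ?mul1r // => t _.
by rewrite mnm0E ffactn0.
Qed.

Lemma sderiv_comp a b f : sderiv a (sderiv b f) = sderiv (a + b)%MM f.
Proof.
apply/funext => q; rewrite !sderivE mulrA -natrM.
by rewrite ff_comp addmA.
Qed.

Lemma sderivU t f : sderiv U_(t)%MM f = pderiv t f.
Proof.
apply/funext => q; rewrite sderivE /pderiv /ff (bigD1 t) //= big1 ?muln1.
  by rewrite mnmDE !mnm1E eqxx ffactn1 addn1.
by move=> s /negbTE hs; rewrite mnm1E eq_sym hs ffactn0.
Qed.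

Lemma sderivD i f g : sderiv i (f + g) = sderiv i f + sderiv i g.
Proof. by apply/funext => q; rewrite addsE !sderivE addsE mulrDr. Qed.

Lemma sderivZ i c f : sderiv i (c *: f) = c *: sderiv i f.
Proof. by apply/funext => q; rewrite scalesE !sderivE scalesE mulrCA. Qed.

Lemma smulDl f g h : smul (f + g) h = smul f h + smul g h.
Proof.
apply/funext => j; rewrite addsE !(@smulE _ _ _ _ _ (mdeg j).+1) //.
by rewrite -big_split; apply: eq_bigr => p _; rewrite addsE mulrDl.
Qed.

Lemma smulDr f g h : smul f (g + h) = smul f g + smul f h.
Proof.
apply/funext => j; rewrite addsE !(@smulE _ _ _ _ _ (mdeg j).+1) //.
by rewrite -big_split; apply: eq_bigr => p _; rewrite addsE mulrDr.
Qed.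

Lemma smulZl c f g : smul (c *: f) g = c *: smul f g.
Proof.
apply/funext => j; rewrite scalesE !(@smulE _ _ _ _ _ (mdeg j).+1) // mulr_sumr.
by apply: eq_bigr => p _; rewrite scalesE mulrA.
Qed.

Lemma smulZr c f g : smul f (c *: g) = c *: smul f g.
Proof.
apply/funext => j; rewrite scalesE !(@smulE _ _ _ _ _ (mdeg j).+1) // mulr_sumr.
by apply: eq_bigr => p _; rewrite scalesE mulrCA.
Qed.

Lemma smul0l f : smul 0 f = 0.
Proof.
apply/funext => j; rewrite (@smulE _ _ _ _ _ (mdeg j).+1) // big1 // => p _.
by rewrite zerosE mul0r.
Qed.

Lemma smul0r f : smul f 0 = 0.
Proof.
apply/funext => j; rewrite (@smulE _ _ _ _ _ (mdeg j).+1) // big1 // => p _.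
by rewrite zerosE mulr0.
Qed.

Lemma smul1l f : smul (sone K n) f = f.
Proof.
apply/funext => j; rewrite (@smulE _ _ _ _ _ (mdeg j).+1) //.
rewrite big_mkcond (bigD1_seq 0%MM) ?mem_dbox ?mdeg0 ?dbox_uniq //=.
have -> : (0 <= j)%MM by apply/mnm_lepP => t; rewrite mnm0E.
rewrite /sone eqxx mul1r subm0 big1 ?addr0 // => p hp.
by rewrite (negbTE hp) mul0r if_same.
Qed.

Lemma smul1r f : smul f (sone K n) = f.
Proof.
apply/funext => j; rewrite (@smulE _ _ _ _ _ (mdeg j).+1) //.
rewrite big_mkcond (bigD1_seq j) ?mem_dbox ?dbox_uniq //= lepm_refl.
have -> : (j - j)%MM = 0%MM by apply/mnmP => t; rewrite mnmBE mnm0E subnn.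
rewrite /sone eqxx mulr1 big1 ?addr0 // => p hp; case: ifP => // hpj.
have -> : ((j - p)%MM == 0%MM) = false.
  apply/negP => /eqP h; move/negP: hp; apply; apply/eqP/mnmP => t.
  move/mnmP: h => /(_ t); rewrite mnmBE mnm0E => /eqP; rewrite subn_eq0 => h.
  by apply/eqP; rewrite eqn_leq h (mnm_lepP hpj).
by rewrite mulr0.
Qed.

End Series2.


Section Leibniz.
Variables (K : numFieldType) (n : nat).
Local Notation X := ('X_{1..n}).
Local Notation T := (@setT 'X_{1..n}).
Local Notation series := (series K n).
Implicit Types (f g h : series).

Lemma bndP (F : X -> K) B : (forall x, F x != 0 -> (mdeg x < B)%N) -> bnd F B.
Proof.
move=> h x hx; apply/eqP; apply: contraLR hx => /h; by rewrite -ltnNge.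
Qed.

Lemma ind_nz (b : bool) (z : K) : b%:R * z != 0 -> b.
Proof. by case: b => //; rewrite mul0r eqxx. Qed.

Lemma sum_nz (I : Type) (r : seq I) (P : pred I) (F : I -> K) :
  \sum_(x <- r | P x) F x != 0 -> exists x, F x != 0.
Proof.
move=> h; case: (pselect (exists x, F x != 0)) => // hn; exfalso.
move/eqP: h; apply; apply: big1 => x _; apply/eqP/negPn/negP => hx.
by apply: hn; exists x.
Qed.

Lemma dsum_shift (G : X -> K) i B B' : bnd (fun a => G (a + i)%MM) B -> bnd G B' ->
  \sum_(a <- dbox n B) G (a + i)%MM = \sum_(a <- dbox n B') (if (i <= a)%MM then G a else 0).
Proof.
move=> h1 h2; rewrite -(fsumT h1) fsum_shift (@fsumT _ _ _ B') //.
by move=> x hx; rewrite h2 // if_same.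
Qed.

Lemma ff_drop (a i : X) (z : K) :
  (if (i <= a)%MM then (ff a i)%:R * z else 0) = (ff a i)%:R * z.
Proof. by case: ifP => // /negbT /ff_nle ->; rewrite mul0r. Qed.

Lemma smul_shift g h i i' q B : (mdeg q + mdeg i + mdeg i' < B)%N ->
  smul (sderiv i g) (sderiv i' h) q = \sum_(a <- dbox n B) \sum_(b <- dbox n B)
     (((a + b)%MM == (q + i + i')%MM)%:R * ((ff a i * ff b i')%:R * (g a * h b))).
Proof.
move=> hB; have hqB : (mdeg q < B)%N.
  by apply: leq_ltn_trans hB; rewrite -addnA leq_addr.
rewrite (smul_pair _ _ hqB).
have S1 : forall a' : X, \sum_(b' <- dbox n B)
    (((a' + b')%MM == q)%:R * (sderiv i g a' * sderiv i' h b')) =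
   \sum_(b <- dbox n B) (((a' + b)%MM == (q + i')%MM)%:R * (sderiv i g a' * ((ff b i')%:R * h b))).
  move=> a'.
  set G := fun b => ((a' + b)%MM == (q + i')%MM)%:R * (sderiv i g a' * ((ff b i')%:R * h b)).
  rewrite (eq_bigr (fun b' => G (b' + i')%MM)); last first.
    by move=> b' _; rewrite /G [sderiv i' h b']sderivE addmA eqm_add2r.
  rewrite (dsum_shift (B' := B)).
  - apply: eq_bigr => b _; rewrite /G; case: ifP => // /negbT /ff_nle ->.
    by rewrite mul0r mulr0 mulr0.
  - apply: bndP => b' /ind_nz /eqP; rewrite addmA => /addIm hab.
    by apply: leq_ltn_trans hqB; rewrite -hab mdegD leq_addl.
  - apply: bndP => b /ind_nz /eqP hb; apply: leq_ltn_trans hB.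
    by have := congr1 mdeg hb; rewrite !mdegD; lia.
rewrite (eq_bigr _ (fun a' _ => S1 a')).
set G := fun a => \sum_(b <- dbox n B)
    (((a + b)%MM == (q + i + i')%MM)%:R * ((ff a i)%:R * g a * ((ff b i')%:R * h b))).
rewrite (eq_bigr (fun a' => G (a' + i)%MM)); last first.
  move=> a' _; apply: eq_bigr => b _; rewrite sderivE.
  by rewrite -[(q + i + i')%MM]addmA [(i + i')%MM]addmC addmA -[(a' + i + b)%MM]addmA
    [(i + b)%MM]addmC addmA eqm_add2r.
rewrite (dsum_shift (B' := B)).
- apply: eq_bigr => a _; rewrite /G; case: ifP => [_|/negbT /ff_nle hff].
    by apply: eq_bigr => b _; rewrite natrM; congr (_ * _); ring.
  by rewrite big1 // => b _; rewrite hff mulr0n !(mul0r, mulr0).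
- apply: bndP => a' /sum_nz [b /ind_nz /eqP hb]; apply: leq_ltn_trans hB.
  by have := congr1 mdeg hb; rewrite !mdegD; lia.
- apply: bndP => a /sum_nz [b /ind_nz /eqP hb]; apply: leq_ltn_trans hB.
  by have := congr1 mdeg hb; rewrite !mdegD; lia.
Qed.

Lemma mdeg_subK (i k : X) : (i <= k)%MM -> (mdeg i + mdeg (k - i)%MM)%N = mdeg k.
Proof. by move=> h; rewrite -mdegD addmC submK. Qed.

Lemma leibniz g h k q B : (mdeg k < B)%N ->
  sderiv k (smul g h) q = \sum_(i <- dbox n B | (i <= k)%MM)
      (mbinom k i)%:R * smul (sderiv i g) (sderiv (k - i)%MM h) q.
Proof.
move=> hB; set B2 := (mdeg q + mdeg k).+1.
have hB2 : (mdeg (q + k)%MM < B2)%N by rewrite mdegD.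
rewrite sderivE (smul_pair _ _ hB2).
rewrite [RHS](eq_bigr (fun i => (mbinom k i)%:R * \sum_(a <- dbox n B2) \sum_(b <- dbox n B2)
     (((a + b)%MM == (q + k)%MM)%:R * ((ff a i * ff b (k - i)%MM)%:R * (g a * h b))))); last first.
  move=> i hik; rewrite (smul_shift _ _ (B := B2)); last first.
    by rewrite -addnA mdeg_subK.
  by rewrite -addmA [(i + _)%MM]addmC submK.
rewrite mulr_sumr.
under eq_bigr => i _ do rewrite mulr_sumr.
under eq_bigr => i _ do under eq_bigr => a _ do rewrite mulr_sumr.
rewrite exchange_big /=; apply: eq_bigr => a _.
rewrite mulr_sumr exchange_big /=; apply: eq_bigr => b _.
case: eqP => hab; last first.
  by rewrite mul0r mulr0 big1 // => i _; rewrite mul0r mulr0.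
rewrite mul1r.
under eq_bigr => i _ do rewrite mul1r mulrA -natrM.
rewrite -big_distrl /= -natr_sum.
under eq_bigr => i _ do rewrite mulnA.
by rewrite (vandermonde_mff _ _ hB) hab.
Qed.

End Leibniz.


Section Val.
Variables (K : numFieldType) (n : nat).
Local Notation X := ('X_{1..n}).
Local Notation T := (@setT 'X_{1..n}).
Local Notation series := (series K n).
Implicit Types (f g h : series).

Lemma val_ge_le f (a b : int) : b <= a -> val_ge f a -> val_ge f b.
Proof. by move=> hba hf j hj; apply: hf; apply: lt_le_trans hba. Qed.

Lemma val_ge0 f : val_ge f 0.
Proof. by move=> j hj; exfalso; lia. Qed.

Lemma val_geD f g a : val_ge f a -> val_ge g a -> val_ge (f + g) a.
Proof. by move=> hf hg j hj; rewrite addsE hf ?hg ?addr0. Qed.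

Lemma val_geZ c f a : val_ge f a -> val_ge (c *: f) a.
Proof. by move=> hf j hj; rewrite scalesE hf ?mulr0. Qed.

Lemma val_ge_nz f a j : val_ge f a -> f j != 0 -> a <= (mdeg j)%:Z.
Proof.
move=> hf; apply: contraR; rewrite -ltNge => hj.
by rewrite hf ?eqxx.
Qed.

Lemma val_ge_smul f g a b : val_ge f a -> val_ge g b -> val_ge (smul f g) (a + b).
Proof.
move=> hf hg j hj; rewrite (@smulE _ _ _ _ _ (mdeg j).+1) // big1 // => p hp.
have e := mdeg_subK hp.
case: (boolP (f p == 0)) => [/eqP ->|hfp]; first by rewrite mul0r.
case: (boolP (g (j - p)%MM == 0)) => [/eqP ->|hgp]; first by rewrite mulr0.
have := val_ge_nz hf hfp; have := val_ge_nz hg hgp; lia.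
Qed.

Lemma val_ge_sderiv f a i : val_ge f a -> val_ge (sderiv i f) (a - (mdeg i)%:Z).
Proof.
move=> hf q hq; rewrite sderivE hf ?mulr0 //; rewrite mdegD; lia.
Qed.

Lemma val_ge_sum (I : Type) (r : seq I) (P : pred I) (F : I -> series) a :
  (forall i, P i -> val_ge (F i) a) -> val_ge (\sum_(i <- r | P i) F i) a.
Proof.
move=> hF j hj; rewrite fct_sumE big1 // => i hi; exact: hF.
Qed.

Lemma val_ge_fsum (F : X -> series) a (A : set X) :
  (forall i, A i -> val_ge (F i) a) -> val_ge (fun j => \sum_(i \in A) F i j) a.
Proof. by move=> hF j hj; rewrite fsbig1 // => i hi; rewrite hF. Qed.

Definition sbnd (G : X -> series) (c : nat) :=
  forall k j, (mdeg j + c <= mdeg k)%N -> G k j = 0.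

Lemma sbnd_val (G : X -> series) (c : nat) :
  (forall k, val_ge (G k) ((mdeg k)%:Z - c%:Z)) -> sbnd G c.+1.
Proof. by move=> hG k j hj; apply: hG; lia. Qed.

Lemma sbnd_le G c c' : (c <= c')%N -> sbnd G c -> sbnd G c'.
Proof. by move=> hc hG k j hj; apply: hG; apply: leq_trans hj; rewrite leq_add2l. Qed.

Lemma sbnd_smull G (H : X -> series) c : sbnd G c -> sbnd (fun k => smul (G k) (H k)) c.
Proof.
move=> hG k j hj; rewrite (@smulE _ _ _ _ _ (mdeg j).+1) // big1 // => p hp.
rewrite hG ?mul0r //; apply: leq_trans hj; rewrite leq_add2r; exact: mdeg_lem.
Qed.

Lemma sbnd_smulr G (H : X -> series) c : sbnd G c -> sbnd (fun k => smul (H k) (G k)) c.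
Proof.
move=> hG k j hj; rewrite (@smulE _ _ _ _ _ (mdeg j).+1) // big1 // => p hp.
rewrite hG ?mulr0 //; apply: leq_trans hj; rewrite leq_add2r; exact: mdegB.
Qed.

Lemma sbnd_sderiv G c i : sbnd G c -> sbnd (fun k => sderiv i (G k)) (c + mdeg i).
Proof.
move=> hG k j hj; rewrite sderivE hG ?mulr0 //; rewrite mdegD; lia.
Qed.

Lemma sbnd_bnd G c j : sbnd G c -> bnd (fun k => G k j) (mdeg j + c).
Proof. by move=> hG k hk; apply: hG. Qed.

Definition lsum (G : X -> series) : series := fun j => \sum_(k \in T) G k j.

Lemma lsumE G c j : sbnd G c -> lsum G j = \sum_(k <- dbox n (mdeg j + c)) G k j.
Proof. by move=> hG; rewrite /lsum (fsumT (sbnd_bnd (j:=j) hG)). Qed.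

Lemma sderiv_lsum i G : sderiv i (lsum G) = lsum (fun k => sderiv i (G k)).
Proof.
apply/funext => q; rewrite sderivE /lsum -fsumZ; apply: eq_fsbigr => k _.
by rewrite sderivE.
Qed.

Lemma smul_lsum_r g G c : sbnd G c -> smul g (lsum G) = lsum (fun k => smul g (G k)).
Proof.
move=> hG; apply/funext => j; rewrite (lsumE _ (@sbnd_smulr G (fun _ => g) c hG)).
rewrite (@smulE _ _ _ _ _ (mdeg j).+1) //.
under eq_bigr => p hp.
  rewrite /lsum (fsumT (b := mdeg j + c)); last first.
    by move=> k hk; apply: hG; apply: leq_trans hk; rewrite leq_add2r mdegB.
  rewrite mulr_sumr.
over.
rewrite exchange_big /=; apply: eq_bigr => k _.
by rewrite (@smulE _ _ _ _ _ (mdeg j).+1).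
Qed.

Lemma smul_lsum_l h G c : sbnd G c -> smul (lsum G) h = lsum (fun k => smul (G k) h).
Proof.
move=> hG; apply/funext => j; rewrite (lsumE _ (@sbnd_smull G (fun _ => h) c hG)).
rewrite (@smulE _ _ _ _ _ (mdeg j).+1) //.
under eq_bigr => p hp.
  rewrite /lsum (fsumT (b := mdeg j + c)); last first.
    by move=> k hk; apply: hG; apply: leq_trans hk; rewrite leq_add2r mdeg_lem.
  rewrite mulr_suml.
over.
rewrite exchange_big /=; apply: eq_bigr => k _.
by rewrite (@smulE _ _ _ _ _ (mdeg j).+1).
Qed.

Lemma smul_sumr (I : Type) (r : seq I) (P : pred I) g (F : I -> series) :
  smul g (\sum_(i <- r | P i) F i) = \sum_(i <- r | P i) smul g (F i).
Proof.
elim/big_rec2: _ => [|i y1 y2 _ <-]; first by rewrite smul0r.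
by rewrite smulDr.
Qed.

Lemma smul_suml (I : Type) (r : seq I) (P : pred I) g (F : I -> series) :
  smul (\sum_(i <- r | P i) F i) g = \sum_(i <- r | P i) smul (F i) g.
Proof.
elim/big_rec2: _ => [|i y1 y2 _ <-]; first by rewrite smul0l.
by rewrite smulDl.
Qed.

Lemma sderiv_sum (I : Type) (r : seq I) (P : pred I) i (F : I -> series) :
  sderiv i (\sum_(x <- r | P x) F x) = \sum_(x <- r | P x) sderiv i (F x).
Proof.
elim/big_rec2: _ => [|x y1 y2 _ <-].
  by apply/funext => q; rewrite sderivE zerosE mulr0.
by rewrite sderivD.
Qed.

Lemma leibnizS g h k B : (mdeg k < B)%N ->
  sderiv k (smul g h) = \sum_(i <- dbox n B | (i <= k)%MM)
      (mbinom k i)%:R *: smul (sderiv i g) (sderiv (k - i)%MM h).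
Proof.
move=> hB; apply/funext => q; rewrite (leibniz _ _ _ hB) fct_sumE.
by apply: eq_bigr => i _; rewrite scalesE.
Qed.

End Val.


Section Ops.
Variables (K : numFieldType) (n : nat).
Local Notation X := ('X_{1..n}).
Local Notation T := (@setT 'X_{1..n}).
Local Notation series := (series K n).
Local Notation fsdo := (fsdo K n).
Implicit Types (f g h : series) (P Q R : fsdo).

Definition inS P (c : nat) := forall k, val_ge (P k) ((mdeg k)%:Z - c%:Z).

Lemma in_SP P : in_S P -> exists c, inS P c.
Proof. by case=> N hN; exists `|N|%N => k; apply: (val_ge_le _ (hN k)); lia. Qed.

Lemma inS_in_S P c : inS P c -> in_S P.
Proof. by move=> h; exists c%:Z. Qed.

Lemma inS_le P c c' : (c <= c')%N -> inS P c -> inS P c'.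
Proof. by move=> hc h k; apply: (val_ge_le _ (h k)); lia. Qed.

Lemma inS_sbnd P c : inS P c -> sbnd P c.+1.
Proof. exact: sbnd_val. Qed.

Lemma actE P g : act P g = lsum (fun k => smul (P k) (sderiv k g)).
Proof. by []. Qed.

Lemma act_sbnd P c g : sbnd P c -> sbnd (fun k => smul (P k) (sderiv k g)) c.
Proof. exact: sbnd_smull. Qed.

Lemma fsum_single (G : X -> K) c : (forall x, x != c -> G x = 0) ->
  \sum_(x \in T) G x = G c.
Proof.
move=> hG; rewrite -(fsbig_widen [set c]) ?fsbig_set1 //.
by move=> x [_ /= hx]; rewrite /= hG //; apply/eqP.
Qed.

Lemma act_welldefS P c : inS P c -> act_welldef P.
Proof.
move=> /inS_sbnd hP f j; apply: (sub_finite_set _ (finite_seq (dbox n (mdeg j + c.+1)))).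
move=> k /= hk; rewrite mem_dbox ltnNge; apply/negP => hk'; move: hk.
by rewrite (act_sbnd f hP) ?eqxx.
Qed.

Lemma act_lin P c : inS P c -> forall (a : K) f g,
  act P (a *: f + g) = a *: act P f + act P g.
Proof.
move=> /inS_sbnd hP a f g; apply/funext => j; rewrite addsE scalesE !actE.
rewrite !(lsumE _ (act_sbnd _ hP)) mulr_sumr -big_split /=.
apply: eq_bigr => k _; rewrite sderivD sderivZ smulDr smulZr.
by rewrite addsE scalesE.
Qed.

Lemma act_cont P c : inS P c -> madic_continuous (act P).
Proof.
move=> hP N; exists (N + c%:Z) => f hf; rewrite actE /lsum.
apply: val_ge_fsum => k _.
apply: (val_ge_le _ (val_ge_smul (hP k) (val_ge_sderiv (i:=k) hf))); lia.
Qed.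

Lemma act_add P Q cP cQ : inS P cP -> inS Q cQ -> forall f,
  act (P + Q) f = act P f + act Q f.
Proof.
move=> /inS_sbnd hP /inS_sbnd hQ f; apply/funext => j; rewrite addsE !actE /lsum.
rewrite -(fsumD (b := mdeg j + (maxn cP.+1 cQ.+1))).
- by apply: eq_fsbigr => k _; rewrite [(P + Q) k]/= smulDl addsE.
- exact: (sbnd_bnd (j:=j) (act_sbnd f (sbnd_le (leq_maxl _ _) hP))).
- exact: (sbnd_bnd (j:=j) (act_sbnd f (sbnd_le (leq_maxr _ _) hQ))).
Qed.

Lemma act_scale P (a : K) f : act (a *: P) f = a *: act P f.
Proof.
apply/funext => j; rewrite scalesE !actE /lsum -fsumZ.
by apply: eq_fsbigr => k _; rewrite [(a *: P) k]/= smulZl scalesE.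
Qed.

Lemma act_done f : act (done K n) f = f.
Proof.
apply/funext => j; rewrite actE /lsum (fsum_single (c := 0%MM)).
  by rewrite /done eqxx smul1l sderiv0.
by move=> k /negbTE hk; rewrite /done hk smul0l zerosE.
Qed.

Lemma act_dcoef g f : act (dcoef g) f = smul g f.
Proof.
apply/funext => j; rewrite actE /lsum (fsum_single (c := 0%MM)).
  by rewrite /dcoef eqxx sderiv0.
by move=> k /negbTE hk; rewrite /dcoef hk smul0l zerosE.
Qed.

Lemma act_dpart t f : act (dpart K t) f = pderiv t f.
Proof.
apply/funext => j; rewrite actE /lsum (fsum_single (c := U_(t)%MM)).
  by rewrite /dpart eqxx smul1l sderivU.
by move=> k /negbTE hk; rewrite /dpart hk smul0l zerosE.
Qed.

End Ops.


Section Dmul.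
Variables (K : numFieldType) (n : nat).
Local Notation X := ('X_{1..n}).
Local Notation T := (@setT 'X_{1..n}).
Local Notation series := (series K n).
Local Notation fsdo := (fsdo K n).
Implicit Types (f g h : series) (P Q R : fsdo).

Lemma sum_nz2 (I : Type) (r : seq I) (P : pred I) (F : I -> K) :
  \sum_(x <- r | P x) F x != 0 -> exists2 x, P x & F x != 0.
Proof.
move=> h; case: (pselect (exists2 x, P x & F x != 0)) => // hn; exfalso.
move/eqP: h; apply; apply: big1 => x hx; apply/eqP/negPn/negP => hF.
by apply: hn; exists x.
Qed.

Lemma memL (m k i : X) : (i \in lrange m k) = ((i <= k) && (k - i <= m))%MM.
Proof. by apply/idP/idP => [/set_mem|h] //; exact: mem_set. Qed.

Lemma lrange_sum (F : X -> K) (m k : X) :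
  \sum_(i \in lrange m k) F i = \sum_(i <- dbox n (mdeg k).+1 | (i <= k)%MM)
     (if (k - i <= m)%MM then F i else 0).
Proof.
rewrite fsbig_mkcond (fsumT (b := (mdeg k).+1)).
  rewrite [RHS]big_mkcond; apply: eq_bigr => i _; rewrite /patch memL.
  by case: (i <= k)%MM; case: (k - i <= m)%MM.
move=> i hi; rewrite /patch memL; case: ifP => // /andP[hik _].
by move: hi; rewrite leqNgt ltnS (mdeg_lem hik).
Qed.

Lemma lterm_val P Q cP cQ (m k i : X) : inS P cP -> inS Q cQ -> (i <= k)%MM -> (k - i <= m)%MM ->
  val_ge (lterm P Q m k i) ((mdeg m)%:Z - cP%:Z - cQ%:Z).
Proof.
move=> hP hQ hik hkm; rewrite /lterm; apply: val_geZ.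
apply: (val_ge_le _ (val_ge_smul (hP k) (val_ge_sderiv (i:=i) (hQ (m - (k - i))%MM)))).
have e1 := mdeg_subK hik; have e2 := mdeg_subK hkm; lia.
Qed.

Lemma dmul_inS P Q cP cQ : inS P cP -> inS Q cQ -> inS (dmul P Q) (cP + cQ).
Proof.
move=> hP hQ m.
apply: (@val_ge_fsum _ _ (fun k j => \sum_(i \in lrange m k) lterm P Q m k i j)) => k _.
apply: val_ge_fsum => i /= /andP[hik hkm].
apply: (val_ge_le _ (lterm_val hP hQ hik hkm)); lia.
Qed.

Lemma lterm_sbnd P Q cP (m k i j : X) : inS P cP -> (mdeg j + cP.+1 <= mdeg k)%N ->
  forall g, smul (lterm P Q m k i) g j = 0.
Proof.
move=> /inS_sbnd hP hk g; rewrite /lterm smulZl scalesE.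
have := @sbnd_smull _ _ _ (fun _ => g) _
  (@sbnd_smull _ _ P (fun k => sderiv i (Q (m - (k - i))%MM)) _ hP) k j hk.
by move=> /= ->; rewrite mulr0.
Qed.

Lemma Lk_sbnd P Q cP (m : X) : inS P cP ->
  sbnd (fun k j => \sum_(i \in lrange m k) lterm P Q m k i j) cP.+1.
Proof.
move=> hP k j hj; rewrite fsbig1 // => i _.
have := lterm_sbnd Q m i hP hj (sone K n); rewrite smul1r => ->.
by [].
Qed.

Lemma dmul_welldefS P Q cP : inS P cP -> dmul_welldef P Q.
Proof.
move=> hP m j; apply: (sub_finite_set _ (finite_seq (dbox n (mdeg j + cP.+1)))).
move=> k /= [i _ hk]; rewrite mem_dbox ltnNge; apply/negP => hk'; move: hk.
have := lterm_sbnd Q m i hP hk' (sone K n); rewrite smul1r => ->.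
by rewrite eqxx.
Qed.

Lemma lterm_S_bnd P Q cP cQ (m k i j : X) f : inS P cP -> inS Q cQ ->
  (i <= k)%MM -> (k - i <= m)%MM ->
  smul (lterm P Q m k i) (sderiv m f) j != 0 ->
  (mdeg m < mdeg j + cP + cQ + 1)%N /\ (mdeg k < mdeg j + cP + cQ + 1)%N.
Proof.
move=> hP hQ hik hkm hnz; split.
  have := val_ge_nz (val_ge_smul (lterm_val hP hQ hik hkm) (val_ge0 (sderiv m f))) hnz.
  lia.
rewrite ltnNge; apply/negP => hk; move: hnz.
rewrite (lterm_sbnd Q m i hP) ?eqxx //; apply: leq_trans hk; lia.
Qed.

Lemma act_dmul P Q cP cQ f : inS P cP -> inS Q cQ ->
  act (dmul P Q) f = act P (act Q f).
Proof.
move=> hP hQ; have sP := inS_sbnd hP; have sQ := inS_sbnd hQ.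
have R1 : (fun k => smul (P k) (sderiv k (act Q f))) =
   (fun k => lsum (fun l => \sum_(i <- dbox n (mdeg k).+1 | (i <= k)%MM)
        (mbinom k i)%:R *: smul (smul (P k) (sderiv i (Q l))) (sderiv (l + (k - i))%MM f))).
  apply/funext => k; rewrite actE sderiv_lsum.
  rewrite (smul_lsum_r _ (sbnd_sderiv (i:=k) (act_sbnd f sQ))).
  congr lsum; apply/funext => l.
  rewrite (leibnizS _ _ (ltnSn (mdeg k))) smul_sumr; apply: eq_bigr => i _.
  by rewrite smulZr sderiv_comp smul_assoc [(k - i + l)%MM]addmC.
have L1 : forall m, smul (dmul P Q m) (sderiv m f) = lsum (fun k =>
    \sum_(i <- dbox n (mdeg k).+1 | (i <= k)%MM)
       (if (k - i <= m)%MM then smul (lterm P Q m k i) (sderiv m f) else 0)).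
  move=> m.
  have -> : dmul P Q m = lsum (fun k j => \sum_(i \in lrange m k) lterm P Q m k i j) by [].
  rewrite (smul_lsum_l _ (Lk_sbnd Q m hP)); congr lsum; apply/funext => k.
  have -> : (fun j => \sum_(i \in lrange m k) lterm P Q m k i j) =
      \sum_(i <- dbox n (mdeg k).+1 | (i <= k)%MM)
         (if (k - i <= m)%MM then lterm P Q m k i else 0).
    apply/funext => j; rewrite lrange_sum fct_sumE; apply: eq_bigr => i _.
    by case: ifP.
  rewrite smul_suml; apply: eq_bigr => i _; case: ifP => //; by rewrite smul0l.
apply/funext => j.
rewrite [in LHS]actE [in RHS]actE R1 /lsum.
under eq_fsbigr => m _ do rewrite L1 /lsum.
rewrite (fsum_exchange (b := mdeg j + cP + cQ + 1)); last first.
  move=> m k; rewrite fct_sumE => /sum_nz2 [i hik].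
  case: ifP => [hkm hnz|_]; last by rewrite zerosE eqxx.
  exact: lterm_S_bnd hP hQ hik hkm hnz.
apply: eq_fsbigr => k _.
under eq_fsbigr => m _ do rewrite fct_sumE.
under [RHS]eq_fsbigr => l _ do rewrite fct_sumE.
rewrite (fsum_big _ (b := mdeg j + cP + cQ + 1)); last first.
  move=> i hik m hm; case: ifP => hkm; last by rewrite zerosE.
  apply/eqP; apply: contraLR hm => hnz; rewrite -ltnNge.
  by case: (lterm_S_bnd hP hQ hik hkm hnz).
rewrite [RHS](fsum_big _ (b := mdeg j + cP + cQ + 1)); last first.
  move=> i hik l hl; apply/eqP; apply: contraLR hl => hnz; rewrite -ltnNge.
  move: hnz; rewrite scalesE mulf_eq0 negb_or => /andP[_ hnz].
  have := val_ge_nz (val_ge_smul (val_ge_smul (hP k) (val_ge_sderiv (i:=i) (hQ l)))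
     (val_ge0 (sderiv (l + (k - i))%MM f))) hnz.
  have := mdeg_lem hik; lia.
apply: eq_bigr => i hik.
rewrite (eq_fsbigr (fun m => if (k - i <= m)%MM then
   smul (lterm P Q m k i) (sderiv m f) j else 0)); last by move=> m _; case: ifP.
rewrite -fsum_shift; apply: eq_fsbigr => l _.
by rewrite /lterm addmK smulZl.
Qed.

End Dmul.


Section Inj.
Variables (K : numFieldType) (n : nat).
Local Notation X := ('X_{1..n}).
Local Notation T := (@setT 'X_{1..n}).
Local Notation series := (series K n).
Local Notation fsdo := (fsdo K n).
Implicit Types (f g h : series) (P Q R : fsdo).

Lemma mdeg_ltm (a k : X) : (a <= k)%MM -> a != k -> (mdeg a < mdeg k)%N.
Proof.
move=> h hne; have e := mdeg_subK h.
suff : (0 < mdeg (k - a)%MM)%N by lia.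
rewrite lt0n mdeg_eq0; apply: contra hne => /eqP h0; apply/eqP/mnmP => t.
move/mnmP: h0 => /(_ t); rewrite mnmBE mnm0E => /eqP; rewrite subn_eq0 => h2.
by apply/eqP; rewrite eqn_leq h2 (mnm_lepP h t).
Qed.

Lemma ff_kk_nz (k : X) : (ff k k)%:R != 0 :> K.
Proof.
rewrite pnatr_eq0 -lt0n /ff; apply: prodn_gt0 => t.
by rewrite ffactnn fact_gt0.
Qed.

Definition mono (k : X) : series := fun j => (j == k)%:R.

Lemma sderiv_mono k : sderiv k (mono k) = (ff k k)%:R *: sone K n.
Proof.
apply/funext => r; rewrite sderivE scalesE /mono /sone.
case: (eqVneq r 0%MM) => [->|hr]; first by rewrite add0m !eqxx mulr1.
rewrite (_ : ((r + k)%MM == k) = false) ?mulr0 //.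
apply/negP => /eqP h; move/negP: hr; apply; apply/eqP.
by apply: (@addIm _ k); rewrite add0m.
Qed.

Lemma sderiv_mono0 k k' : ~~ (k' <= k)%MM -> sderiv k' (mono k) = 0.
Proof.
move=> h; apply/funext => r; rewrite sderivE zerosE /mono.
case: eqP => [e|]; last by rewrite mulr0.
by move: h; rewrite -e lem_addl.
Qed.

Lemma act_inj0 R c : inS R c -> (forall f, act R f = 0) -> R = 0.
Proof.
move=> hR h0.
suff H : forall d k, (mdeg k < d)%N -> R k = 0.
  by apply/funext => k; apply: (H (mdeg k).+1).
elim=> [//|d IH] k hk.
apply/funext => q.
have e := congr1 (fun F => F q) (h0 (mono k)); move: e.
rewrite /= actE /lsum zerosE (fsum_single (c := k)).
  rewrite sderiv_mono smulZr smul1r scalesE => /eqP.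
  by rewrite mulf_eq0 (negbTE (ff_kk_nz k)) /= => /eqP ->.
move=> k' hne; case: (boolP (k' <= k)%MM) => hle.
  rewrite (IH k') ?smul0l ?zerosE //.
  by apply: leq_trans (mdeg_ltm hle hne) _; rewrite -ltnS.
by rewrite sderiv_mono0 // smul0r zerosE.
Qed.

Lemma inS_add P Q c : inS P c -> inS Q c -> inS (P + Q) c.
Proof. by move=> hP hQ k; apply: val_geD. Qed.

Lemma inS_scale P c (a : K) : inS P c -> inS (a *: P) c.
Proof. by move=> hP k; apply: val_geZ. Qed.

Lemma inS_max P c c' : inS P c -> inS P (maxn c c').
Proof. by apply: inS_le; exact: leq_maxl. Qed.

Lemma inS_max' P c c' : inS P c' -> inS P (maxn c c').
Proof. by apply: inS_le; exact: leq_maxr. Qed.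

Lemma act_inj P Q cP cQ : inS P cP -> inS Q cQ ->
  (forall f, act P f = act Q f) -> P = Q.
Proof.
move=> hP hQ h.
have hQ' : inS ((-1) *: Q) cQ by exact: inS_scale.
have hR : inS (P + (-1) *: Q) (maxn cP cQ).
  by apply: inS_add; [exact: inS_max | exact: inS_max'].
have := act_inj0 hR; rewrite scaleN1r => H.
apply/eqP; rewrite -subr_eq0; apply/eqP; apply: H => f.
by rewrite -scaleN1r (act_add hP hQ') act_scale h scaleN1r subrr.
Qed.

Lemma inS0 : inS (0 : fsdo) 0.
Proof. by move=> k j _. Qed.

Lemma inS_done : inS (done K n) 0.
Proof.
move=> k j hj; rewrite /done; case: ifP => [/eqP hk|_]; last by rewrite zerosE.
by move: hj; rewrite hk mdeg0; lia.
Qed.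

Lemma inS_dcoef g : inS (dcoef g) 0.
Proof.
move=> k j hj; rewrite /dcoef; case: ifP => [/eqP hk|_]; last by rewrite zerosE.
by move: hj; rewrite hk mdeg0; lia.
Qed.

Lemma inS_dpart (t : 'I_n) : inS (dpart K t) 1.
Proof.
move=> k j hj; rewrite /dpart; case: ifP => [/eqP hk|_]; last by rewrite zerosE.
by move: hj; rewrite hk mdeg1; lia.
Qed.

Lemma act_addf P c : inS P c -> forall f g, act P (f + g) = act P f + act P g.
Proof. by move=> hP f g; rewrite -[f in LHS]scale1r (act_lin hP) scale1r. Qed.

Lemma act0 P : act P 0 = 0.
Proof.
apply/funext => j; rewrite actE /lsum zerosE fsbig1 // => k _.
have -> : sderiv k (0 : series) = 0 by apply/funext => q; rewrite sderivE zerosE mulr0.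
by rewrite smul0r zerosE.
Qed.

Lemma act_scalef P c : inS P c -> forall (a : K) f, act P (a *: f) = a *: act P f.
Proof. by move=> hP a f; rewrite -[a *: f]addr0 (act_lin hP) act0 addr0. Qed.

End Inj.


Section Laws.
Variables (K : numFieldType) (n : nat).
Local Notation X := ('X_{1..n}).
Local Notation series := (series K n).
Local Notation fsdo := (fsdo K n).
Implicit Types (f g h : series) (P Q R : fsdo).

Lemma laws P Q R : in_S P -> in_S Q -> in_S R ->
      [/\ dmul (dmul P Q) R = dmul P (dmul Q R),
          dmul (done K n) P = P /\ dmul P (done K n) = P,
          dmul (P + Q) R = dmul P R + dmul Q R,
          dmul R (P + Q) = dmul R P + dmul R Q &
          forall c : K, dmul (c *: P) Q = c *: dmul P Q /\
                           dmul P (c *: Q) = c *: dmul P Q].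
Proof.
move=> /in_SP[cP hP] /in_SP[cQ hQ] /in_SP[cR hR].
have hPQ : inS (P + Q) (maxn cP cQ) by apply: inS_add; [exact: inS_max | exact: inS_max'].
split.
- apply: (act_inj (dmul_inS (dmul_inS hP hQ) hR) (dmul_inS hP (dmul_inS hQ hR))) => f.
  rewrite (act_dmul _ (dmul_inS hP hQ) hR) (act_dmul _ hP hQ).
  by rewrite (act_dmul _ hP (dmul_inS hQ hR)) (act_dmul _ hQ hR).
- split.
    apply: (act_inj (dmul_inS (@inS_done K n) hP) hP) => f.
    by rewrite (act_dmul _ (@inS_done K n) hP) act_done.
  apply: (act_inj (dmul_inS hP (@inS_done K n)) hP) => f.
  by rewrite (act_dmul _ hP (@inS_done K n)) act_done.
- have h1 := dmul_inS hP hR; have h2 := dmul_inS hQ hR.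
  apply: (act_inj (dmul_inS hPQ hR) (inS_add (inS_max (c' := cQ + cR) h1) (inS_max' (c := cP + cR) h2))) => f.
  rewrite (act_dmul _ hPQ hR) (act_add hP hQ) (act_add h1 h2).
  by rewrite (act_dmul _ hP hR) (act_dmul _ hQ hR).
- have h1 := dmul_inS hR hP; have h2 := dmul_inS hR hQ.
  apply: (act_inj (dmul_inS hR hPQ) (inS_add (inS_max (c' := cR + cQ) h1) (inS_max' (c := cR + cP) h2))) => f.
  rewrite (act_dmul _ hR hPQ) (act_add hP hQ) (act_add h1 h2).
  by rewrite (act_dmul _ hR hP) (act_dmul _ hR hQ) (act_addf hR).
- move=> c; have hcP := inS_scale c hP; have hcQ := inS_scale c hQ.
  have h0 := dmul_inS hP hQ.
  split.
    apply: (act_inj (dmul_inS hcP hQ) (inS_scale c h0)) => f.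
    by rewrite (act_dmul _ hcP hQ) act_scale act_scale (act_dmul _ hP hQ).
  apply: (act_inj (dmul_inS hP hcQ) (inS_scale c h0)) => f.
  by rewrite (act_dmul _ hP hcQ) act_scale act_scale (act_scalef hP) (act_dmul _ hP hQ).
Qed.

End Laws.


Section Part2.
Variables (K : numFieldType) (n : nat).
Local Notation X := ('X_{1..n}).
Local Notation T := (@setT 'X_{1..n}).
Local Notation series := (series K n).
Local Notation fsdo := (fsdo K n).
Implicit Types (f g h : series) (P Q R : fsdo).

Lemma P2a P : in_S P -> exists p : {mpoly K[n]}, forall k, p@_k = P k 0%MM.
Proof.
move=> /in_SP[c hP]; exists (\sum_(m <- dbox n c.+1) P m 0%MM *: 'X_[m]) => k.
rewrite (big_morph (mcoeff k) (mcoeffD k) (mcoeff0 _ k)).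
rewrite (eq_bigr (fun m => (m == k)%:R * P m 0%MM)); last first.
  by move=> m _; rewrite mcoeffZ mcoeffX mulrC.
rewrite dsum_delta; case: ifP => // /negbT hk; symmetry; apply: hP.
rewrite mdeg0; lia.
Qed.

Lemma P2b (p : {mpoly K[n]}) : exists2 P : fsdo, in_S P & forall k, P k 0%MM = p@_k.
Proof.
exists (fun k j => (j == 0%MM)%:R * p@_k); last by move=> k; rewrite eqxx mul1r.
apply: (inS_in_S (c := msize p)) => k j hj.
case: eqP => [hj0|_]; last by rewrite mul0r.
rewrite hj0 in hj; rewrite mul1r; apply/eqP.
have hm : (msize p <= mdeg k)%N by move: hj; rewrite mdeg0; lia.
rewrite mcoeff_eq0; apply: msize_mdeg_ge; exact: hm.
Qed.

Lemma svar_val (t : 'I_n) : val_ge (svar K t) 1.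
Proof.
move=> j hj; rewrite /svar; case: eqP => [hjt|_]; last by rewrite mulr0n.
by move: hj; rewrite hjt mdeg1; lia.
Qed.

Lemma in_m_val f : in_m f -> val_ge f 1.
Proof.
case=> g ->; apply: val_ge_sum => t _.
by apply: (val_ge_le _ (val_ge_smul (svar_val t) (val_ge0 (g t)))); lia.
Qed.

Lemma inS_lmul f Q c : inS Q c -> inS (lmul f Q) c.
Proof.
move=> hQ k; apply: (val_ge_le _ (val_ge_smul (val_ge0 f) (hQ k))); lia.
Qed.

Lemma inS_sum (s : seq (series * fsdo)) : (forall x, x \in s -> in_S x.2) ->
  exists c, inS (\sum_(x <- s) lmul x.1 x.2) c.
Proof.
elim: s => [|x s IH] hs; first by exists 0%N; rewrite big_nil; exact: inS0.
have [c hc] : exists c, inS (\sum_(x <- s) lmul x.1 x.2) c.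
  by apply: IH => y hy; apply: hs; rewrite inE hy orbT.
have [c' hc'] := in_SP (hs x (mem_head _ _)).
exists (maxn c' c); rewrite big_cons; apply: inS_add.
  by apply: inS_max; exact: inS_lmul.
exact: inS_max'.
Qed.

Lemma P2c P : in_mS P -> in_S P.
Proof.
case=> s [_ hS ->]; have [c hc] := inS_sum hS; exact: inS_in_S hc.
Qed.

Lemma smul_svar (t : 'I_n) g j :
  smul (svar K t) g j = if (U_(t) <= j)%MM then g (j - U_(t))%MM else 0.
Proof.
rewrite (@smulE _ _ _ _ _ (mdeg j).+1) // big_mkcond.
rewrite (eq_bigr (fun p => (p == U_(t)%MM)%:R * (if (p <= j)%MM then g (j - p)%MM else 0))).
  rewrite dsum_delta; case: ifP => // /negbT hB; case: ifP => // hU.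
  by move: hB; rewrite ltnS (mdeg_lem hU).
move=> p _; rewrite /svar; case: ifP => _; last by rewrite !mulr0.
by [].
Qed.

Lemma mS_zero P : in_mS P -> forall k, P k 0%MM = 0.
Proof.
case=> s [hm _ ->] k; rewrite !fct_sumE big1_seq // => x /andP[_ hx].
rewrite /lmul; have := val_ge_smul (in_m_val (hm x hx)) (val_ge0 (x.2 k)).
by move=> /(_ 0%MM) -> //; rewrite mdeg0.
Qed.

Definition Pt P (t : 'I_n) : fsdo := fun k q =>
  if [forall s : 'I_n, (s < t)%N ==> (q s == 0%N)] then P k (q + U_(t))%MM else 0.

Lemma P2d P : in_S P -> (forall k, P k 0%MM = 0) -> in_mS P.
Proof.
move=> /in_SP[c hP] h0.
exists [seq (svar K t, Pt P t) | t <- index_enum 'I_n]; split.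
- move=> x /mapP[t _ ->] /=; exists (fun s => if s == t then sone K n else 0).
  rewrite (bigD1 t) //= eqxx smul1r big1 ?addr0 // => s /negbTE ->.
  exact: smul0r.
- move=> x /mapP[t _ ->] /=; apply: (inS_in_S (c := c.+1)) => k q hq.
  rewrite /Pt; case: ifP => // _; apply: hP; rewrite mdegD mdeg1; lia.
apply/funext => k; apply/funext => j; rewrite big_map !fct_sumE.
case: (eqVneq j 0%MM) => [->|hj].
  rewrite h0 big1 // => t _.
  by rewrite /lmul smul_svar lep1mP mnm0E eqxx.
set cond := fun t : 'I_n => (j t != 0%N) && [forall s : 'I_n, (s < t)%N ==> (j s == 0%N)].
rewrite (eq_bigr (fun t => if cond t then P k j else 0)); last first.
  move=> t _; rewrite /lmul smul_svar /cond lep1mP; case: (boolP (j t != 0%N)) => //= hjt.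
  rewrite /Pt submK ?lep1mP //; congr (if _ then _ else _).
  apply: eq_forallb => s; case: (boolP (s < t)%N) => //= hst.
  rewrite mnmBE mnm1E; suff -> : (t == s) = false by rewrite subn0.
  by apply/negP => /eqP hts; rewrite hts ltnn in hst.
have [t1 ht1] : exists t1 : 'I_n, j t1 != 0%N.
  apply/existsP; apply: contraR hj => /existsPn hz; apply/eqP/mnmP => t.
  by have := hz t; rewrite negbK mnm0E => /eqP.
case: (@arg_minnP _ t1 (fun s : 'I_n => j s != 0%N) (fun s : 'I_n => (s : nat)) ht1) => t0 h0t hmin.
have c0 : cond t0.
  rewrite /cond h0t /=; apply/forallP => s; apply/implyP => hs.
  apply/negPn/negP => hjs; have := hmin s hjs; by rewrite leqNgt hs.
rewrite (bigD1 t0) //= c0 big1 ?addr0 // => t htt0; case: ifP => // ct.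
exfalso; move: ct c0; rewrite /cond => /andP[hjt /forallP hft] /andP[hjt0 /forallP hft0].
case: (ltngtP t t0) => hlt.
- by move: (hft0 t); rewrite hlt /= (negbTE hjt).
- by move: (hft t0); rewrite hlt /= (negbTE hjt0).
- by move/negP: htt0; apply; apply/eqP/val_inj.
Qed.

End Part2.


Section PartD.
Variables (K : numFieldType) (n : nat).
Local Notation X := ('X_{1..n}).
Local Notation T := (@setT 'X_{1..n}).
Local Notation series := (series K n).
Local Notation fsdo := (fsdo K n).
Implicit Types (f g h : series) (P Q R : fsdo).

Lemma fin_bound (A : set X) : finite_set A -> exists b, forall k, A k -> (mdeg k < b)%N.
Proof.
move/finite_seqP => [s hs]; exists (\max_(k <- s) (mdeg k).+1)%N => k hk.
have ks : k \in s by move: hk; rewrite hs.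
exact: (@leq_bigmax_seq _ s xpredT (fun k => (mdeg k).+1) k ks).
Qed.

Lemma inD_bound P : in_D P -> exists b, forall k, P k != 0 -> (mdeg k < b)%N.
Proof. by move/fin_bound => [b hb]; exists b => k hk; apply: hb. Qed.

Lemma inD_inS P : in_D P -> in_S P.
Proof.
move=> /inD_bound [b hb]; apply: (inS_in_S (c := b)) => k j hj.
case: (eqVneq (P k) 0) => [->|hk] //; exfalso; have := hb k hk; lia.
Qed.

Lemma inD_done : in_D (done K n).
Proof.
apply: (sub_finite_set _ (finite_set1 0%MM)) => k /=.
rewrite /done; case: (eqVneq k 0%MM) => // _; by rewrite eqxx.
Qed.

Lemma inD_add P Q : in_D P -> in_D Q -> in_D (P + Q).
Proof.
move=> hP hQ; apply: (sub_finite_set (B := [set k | P k != 0] `|` [set k | Q k != 0])).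
  move=> k /=; have -> : (P + Q) k = P k + Q k by [].
  case: (eqVneq (P k) 0) => [e|hp]; last by left.
  by rewrite e add0r => hq; right.
by rewrite finite_setU.
Qed.

Lemma inD_scale c P : in_D P -> in_D (c *: P).
Proof.
move=> hP; apply: (sub_finite_set _ hP) => k /=.
have -> : (c *: P) k = c *: P k by [].
by apply: contra_neq => ->; rewrite scaler0.
Qed.

Lemma fsum_nz (A : set X) (F : X -> K) :
  \sum_(x \in A) F x != 0 -> exists2 x, A x & F x != 0.
Proof.
move=> h; case: (pselect (exists2 x, A x & F x != 0)) => // hn; exfalso.
move/eqP: h; apply; apply: fsbig1 => x hx; apply/eqP/negPn/negP => hF.
by apply: hn; exists x.
Qed.

Lemma fun_nz (F : series) : F != 0 -> exists j, F j != 0.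
Proof.
move=> h; case: (pselect (exists j, F j != 0)) => // hn; exfalso.
move/eqP: h; apply; apply/funext => j; apply/eqP/negPn/negP => hF.
by apply: hn; exists j.
Qed.

Lemma inD_dmul P Q : in_D P -> in_D Q -> in_D (dmul P Q).
Proof.
move=> /inD_bound[bP hP] /inD_bound[bQ hQ].
apply: (sub_finite_set _ (finite_seq (dbox n (bP + bQ)))) => m /= /fun_nz [j].
move=> /fsum_nz [k _] /fsum_nz [i /= /andP[hik hkm]].
rewrite /lterm scalesE mulf_eq0 negb_or => /andP[_ hnz].
rewrite mem_dbox.
have hk : P k != 0 by apply: contraNneq hnz => ->; rewrite smul0l.
have hl : Q (m - (k - i))%MM != 0.
  apply: contraNneq hnz => ->.
  have -> : sderiv i (0 : series) = 0 by apply/funext => q; rewrite sderivE zerosE mulr0.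
  by rewrite smul0r.
have := hP k hk; have := hQ _ hl; have := mdeg_subK hkm; have := mdegB k i.
lia.
Qed.

Lemma le_mnm1 (t : 'I_n) (i : X) :
  (i <= U_(t))%MM = (i == 0%MM) || (i == U_(t)%MM).
Proof.
apply/idP/idP => [h|/orP[/eqP ->|/eqP ->]]; last exact: lepm_refl.
- case: (boolP (i t == 0%N)) => hit.
    apply/orP; left; apply/eqP/mnmP => s; rewrite mnm0E.
    case: (eqVneq s t) => [->|hst]; first exact/eqP.
    by have := mnm_lepP h s; rewrite mnm1E eq_sym (negbTE hst) leqn0 => /eqP.
  apply/orP; right; apply/eqP/mnmP => s; rewrite mnm1E.
  case: (eqVneq s t) => [->|hst].
    by move: hit; have := mnm_lepP h t; rewrite mnm1E eqxx /=; lia.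
  by have := mnm_lepP h s; rewrite mnm1E eq_sym (negbTE hst) leqn0 => /eqP.
- by apply/mnm_lepP => s; rewrite mnm0E.
Qed.

Lemma sum_leU (t : 'I_n) (F : X -> K) :
  \sum_(i <- dbox n 2 | (i <= U_(t))%MM) F i = F 0%MM + F U_(t)%MM.
Proof.
rewrite -big_filter (perm_big [:: 0%MM; U_(t)%MM]); first by rewrite !big_cons big_nil /= addr0.
apply: uniq_perm.
- by rewrite filter_uniq ?dbox_uniq.
- by rewrite /= inE eq_sym mnm1_eq0.
move=> i; rewrite mem_filter mem_dbox !inE le_mnm1.
case: (eqVneq i 0%MM) => [->|_] /=; first by rewrite mdeg0.
by case: (eqVneq i U_(t)%MM) => [->|_] //=; rewrite mdeg1.
Qed.

Lemma pderiv_smul t f g :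
  pderiv t (smul f g) = smul f (pderiv t g) + smul (pderiv t f) g.
Proof.
rewrite -!sderivU; apply/funext => q; rewrite (leibniz _ _ _ (B := 2)) ?mdeg1 //.
rewrite sum_leU addsE addrC.
have -> : mbinom U_(t)%MM 0%MM = 1%N by rewrite /mbinom big1 // => s _; rewrite mnm0E bin0.
have -> : mbinom U_(t)%MM U_(t)%MM = 1%N by rewrite /mbinom big1 // => s _; rewrite binn.
have -> : (U_(t) - U_(t))%MM = 0%MM by apply/mnmP => s; rewrite mnmBE subnn mnm0E.
by rewrite subm0 !sderiv0 !mul1r addrC.
Qed.

Lemma Drels :
  [/\ forall f g : series, dmul (dcoef f) (dcoef g) = dcoef (smul f g),
      forall t s : 'I_n, dmul (dpart K t) (dpart K s) = dmul (dpart K s) (dpart K t) &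
      forall (t : 'I_n) (f : series),
        dmul (dpart K t) (dcoef f) = dmul (dcoef f) (dpart K t) + dcoef (pderiv t f)].
Proof.
split.
- move=> f g; apply: (act_inj (dmul_inS (inS_dcoef f) (inS_dcoef g)) (inS_dcoef (smul f g))) => h.
  by rewrite (act_dmul _ (inS_dcoef f) (inS_dcoef g)) !act_dcoef smul_assoc.
- move=> t s; apply: (act_inj (dmul_inS (@inS_dpart K n t) (@inS_dpart K n s)) (dmul_inS (@inS_dpart K n s) (@inS_dpart K n t))) => h.
  rewrite (act_dmul _ (@inS_dpart K n t) (@inS_dpart K n s)) (act_dmul _ (@inS_dpart K n s) (@inS_dpart K n t)).
  by rewrite !act_dpart -!sderivU !sderiv_comp addmC.
- move=> t f.
  have h1 := dmul_inS (inS_dcoef f) (@inS_dpart K n t).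
  have h2 : inS (dcoef (pderiv t f)) 1 by apply: (inS_le _ (inS_dcoef _)).
  apply: (act_inj (dmul_inS (@inS_dpart K n t) (inS_dcoef f)) (inS_add h1 h2)) => h.
  rewrite (act_dmul _ (@inS_dpart K n t) (inS_dcoef f)) (act_add h1 h2).
  by rewrite (act_dmul _ (inS_dcoef f) (@inS_dpart K n t)) !act_dpart !act_dcoef pderiv_smul.
Qed.

End PartD.


Theorem main_gen (K : numFieldType) (n : nat) :
  [/\
    [/\ forall P Q : fsdo K n, in_S P -> in_S Q -> dmul_welldef P Q,
        in_S (0 : fsdo K n) /\ in_S (done K n),
        forall P Q : fsdo K n, in_S P -> in_S Q -> in_S (P + Q),
        forall (c : K) (P : fsdo K n), in_S P -> in_S (c *: P) &
        forall P Q : fsdo K n, in_S P -> in_S Q -> in_S (dmul P Q)],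
    forall P Q T : fsdo K n, in_S P -> in_S Q -> in_S T ->
      [/\ dmul (dmul P Q) T = dmul P (dmul Q T),
          dmul (done K n) P = P /\ dmul P (done K n) = P,
          dmul (P + Q) T = dmul P T + dmul Q T,
          dmul T (P + Q) = dmul T P + dmul T Q &
          forall c : K, dmul (c *: P) Q = c *: dmul P Q /\
                           dmul P (c *: Q) = c *: dmul P Q],
    [/\ forall P : fsdo K n, in_D P -> in_S P,
        in_D (done K n),
        forall P Q : fsdo K n, in_D P -> in_D Q -> in_D (P + Q),
        forall (c : K) (P : fsdo K n), in_D P -> in_D (c *: P) &
        forall P Q : fsdo K n, in_D P -> in_D Q -> in_D (dmul P Q)] &
    [/\ forall f g : series K n, dmul (dcoef f) (dcoef g) = dcoef (smul f g),
        forall t s : 'I_n, dmul (dpart K t) (dpart K s)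
                           = dmul (dpart K s) (dpart K t) &
        forall (t : 'I_n) (f : series K n),
          dmul (dpart K t) (dcoef f)
          = dmul (dcoef f) (dpart K t) + dcoef (pderiv t f)]]
  /\
  [/\ forall P : fsdo K n, in_S P ->
        exists p : {mpoly K[n]}, forall k, p@_k = P k 0%MM,
      forall p : {mpoly K[n]},
        exists2 P : fsdo K n, in_S P & forall k, P k 0%MM = p@_k,
      forall P : fsdo K n, in_mS P -> in_S P &
      forall P : fsdo K n, in_S P ->
        ((forall k, P k 0%MM = 0) <-> in_mS P)]
  /\
  [/\ forall P : fsdo K n, in_S P ->
        [/\ act_welldef P,
            forall (c : K) (f g : series K n),
              act P (c *: f + g) = c *: act P f + act P g &
            madic_continuous (act P)],
      forall f : series K n, act (done K n) f = f,
      forall P Q : fsdo K n, in_S P -> in_S Q ->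
        forall f : series K n,
          [/\ act (P + Q) f = act P f + act Q f,
              forall c : K, act (c *: P) f = c *: act P f &
              act (dmul P Q) f = act P (act Q f)],
      forall P Q : fsdo K n, in_S P -> in_S Q ->
        (forall f, act P f = act Q f) -> P = Q &
      forall f g : series K n,
        act (dcoef g) f = smul g f /\
        forall t : 'I_n, act (dpart K t) f = pderiv t f].
Proof.
split; last split.
- split.
  + split.
    * move=> P Q /in_SP[cP hP] _; exact: dmul_welldefS hP.
    * by split; [exact: (inS_in_S (@inS0 K n)) | exact: (inS_in_S (@inS_done K n))].
    * move=> P Q /in_SP[cP hP] /in_SP[cQ hQ]; apply: (inS_in_S (c := maxn cP cQ)).
      by apply: inS_add; [exact: inS_max | exact: inS_max'].
    * by move=> c P /in_SP[cP hP]; apply: (inS_in_S (c := cP)); exact: inS_scale.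
    * move=> P Q /in_SP[cP hP] /in_SP[cQ hQ]; exact: (inS_in_S (dmul_inS hP hQ)).
  + exact: laws.
  + split.
    * exact: inD_inS.
    * exact: inD_done.
    * exact: inD_add.
    * exact: inD_scale.
    * exact: inD_dmul.
  + exact: Drels.
- split.
  + exact: P2a.
  + exact: P2b.
  + exact: P2c.
  + move=> P hP; split; [exact: P2d | exact: mS_zero].
- split.
  + move=> P /in_SP[c hP]; split; [exact: act_welldefS hP | exact: act_lin hP | exact: act_cont hP].
  + exact: act_done.
  + move=> P Q /in_SP[cP hP] /in_SP[cQ hQ] f; split.
    * exact: act_add hP hQ f.
    * by move=> c; exact: act_scale.
    * exact: act_dmul hP hQ.
  + move=> P Q /in_SP[cP hP] /in_SP[cQ hQ]; exact: act_inj hP hQ.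
  + by move=> f g; split; [exact: act_dcoef | move=> t; exact: act_dpart].
Qed.

Theorem theorem5p3 (R : realType) (n : nat) :
  [/\
    [/\ forall P Q : fsdo R[i] n, in_S P -> in_S Q -> dmul_welldef P Q,
        in_S (0 : fsdo R[i] n) /\ in_S (done R[i] n),
        forall P Q : fsdo R[i] n, in_S P -> in_S Q -> in_S (P + Q),
        forall (c : R[i]) (P : fsdo R[i] n), in_S P -> in_S (c *: P) &
        forall P Q : fsdo R[i] n, in_S P -> in_S Q -> in_S (dmul P Q)],
    forall P Q T : fsdo R[i] n, in_S P -> in_S Q -> in_S T ->
      [/\ dmul (dmul P Q) T = dmul P (dmul Q T),
          dmul (done R[i] n) P = P /\ dmul P (done R[i] n) = P,
          dmul (P + Q) T = dmul P T + dmul Q T,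
          dmul T (P + Q) = dmul T P + dmul T Q &
          forall c : R[i], dmul (c *: P) Q = c *: dmul P Q /\
                           dmul P (c *: Q) = c *: dmul P Q],
    [/\ forall P : fsdo R[i] n, in_D P -> in_S P,
        in_D (done R[i] n),
        forall P Q : fsdo R[i] n, in_D P -> in_D Q -> in_D (P + Q),
        forall (c : R[i]) (P : fsdo R[i] n), in_D P -> in_D (c *: P) &
        forall P Q : fsdo R[i] n, in_D P -> in_D Q -> in_D (dmul P Q)] &
    [/\ forall f g : series R[i] n, dmul (dcoef f) (dcoef g) = dcoef (smul f g),
        forall t s : 'I_n, dmul (dpart R[i] t) (dpart R[i] s)
                           = dmul (dpart R[i] s) (dpart R[i] t) &
        forall (t : 'I_n) (f : series R[i] n),
          dmul (dpart R[i] t) (dcoef f)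
          = dmul (dcoef f) (dpart R[i] t) + dcoef (pderiv t f)]]
  /\
  [/\ forall P : fsdo R[i] n, in_S P ->
        exists p : {mpoly R[i][n]}, forall k, p@_k = P k 0%MM,
      forall p : {mpoly R[i][n]},
        exists2 P : fsdo R[i] n, in_S P & forall k, P k 0%MM = p@_k,
      forall P : fsdo R[i] n, in_mS P -> in_S P &
      forall P : fsdo R[i] n, in_S P ->
        ((forall k, P k 0%MM = 0) <-> in_mS P)]
  /\
  [/\ forall P : fsdo R[i] n, in_S P ->
        [/\ act_welldef P,
            forall (c : R[i]) (f g : series R[i] n),
              act P (c *: f + g) = c *: act P f + act P g &
            madic_continuous (act P)],
      forall f : series R[i] n, act (done R[i] n) f = f,
      forall P Q : fsdo R[i] n, in_S P -> in_S Q ->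
        forall f : series R[i] n,
          [/\ act (P + Q) f = act P f + act Q f,
              forall c : R[i], act (c *: P) f = c *: act P f &
              act (dmul P Q) f = act P (act Q f)],
      forall P Q : fsdo R[i] n, in_S P -> in_S Q ->
        (forall f, act P f = act Q f) -> P = Q &
      forall f g : series R[i] n,
        act (dcoef g) f = smul g f /\
        forall t : 'I_n, act (dpart R[i] t) f = pderiv t f].
Proof. exact: (main_gen (R[i]) n). Qed.
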